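(* Suppose Assumption 7.1 holds. Then there exists a unique pair $0<a_*<b_*<\infty$ satisfying $$\int_{a_*}^{b_*}(\pi_2(x)-\pi_2(a_* ))m(x)\,dx+\frac{c_1-c_2}{2s(b_* )}=0,\qquad \int_{a_*}^{b_*}(\pi_1(x)-\pi_1(b_* ))m(x)\,dx+\frac{c_1-c_2}{2s(a_* )}=0,$$ equivalently $\lambda(a_*,b_* )=\pi_1(b_* )=\pi_2(a_* )$.
   Context: Setup. $\mu,\sigma:[0,\infty)\to\mathbb R$ are continuous with $\sigma(x)>0$ for $x>0$ (coefficients of a diffusion on $[0,\infty)$ for which $0$ is unattainable and $\infty$ is natural). $s(x)=\exp\{-\int_1^x\frac{2\mu(y)}{\sigma^2(y)}dy\}$, $m(x)=\frac{1}{\sigma^2(x)s(x)}$ for $x>0$, $M[a,b]=\int_a^bm(x)dx$. Constants $0<c_1<c_2$, nonnegative function $h$. Define $\pi_1(x)=h(x)+c_1\mu(x)$, $\pi_2(x)=h(x)+c_2\mu(x)$, and for $0<a<b$, $\lambda(a,b)=\frac{1}{M[a,b]}\big[\int_a^bh(x)m(x)dx+\frac{c_1}{2s(b)}-\frac{c_2}{2s(a)}\big]$. Assumption 7.1: (i) $h$ and $\mu$ are continuously differentiable, $h'(x)>0$ for all $x>0$, and $h(0)=\mu(0)=0$. (ii) For $i=1,2$ there exists $\hat x_i>0$ such that $\pi_i$ is strictly increasing on $(0,\hat x_i)$ and strictly decreasing on $[\hat x_i,\infty)$; moreover $\lim_{x\to\infty}\pi_1(x)<0$, so that there is $b_0>\hat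 x_1$ with $\pi_1(b_0)=0$. (iii) $\liminf_{a\downarrow0}\Big[\int_0^{b_0}[\pi_1(y)-\pi_1(b_0)]m(y)\,dy+\frac{c_1-c_2}{2s(a)}\Big]>0$. *)

(* Defs.v *)
From Stdlib Require Import Reals.
From Coquelicot Require Import Coquelicot.
Open Scope R_scope.

Definition cont_nonneg (f : R -> R) : Prop :=
  forall x, 0 <= x ->
    filterlim f (within (fun y => 0 <= y) (locally x)) (locally (f x)).

Definition C1_nonneg (f : R -> R) (f' : R -> R) : Prop :=
  (forall x, 0 < x -> is_derive f x (f' x)) /\
  filterlim (fun y => (f y - f 0) / y) (at_right 0) (locally (f' 0)) /\
  cont_nonneg f'.

Definition sdens (mu sigma : R -> R) (x : R) : R :=
  exp (- RInt (fun y => 2 * mu y / (sigma y ^ 2)) 1 x).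

Definition mdens (mu sigma : R -> R) (x : R) : R :=
  / (sigma x ^ 2 * sdens mu sigma x).

Definition Mspeed (mu sigma : R -> R) (a b : R) : R :=
  RInt (mdens mu sigma) a b.

Definition Sscale (mu sigma : R -> R) (a b : R) : R :=
  RInt (sdens mu sigma) a b.

(* Feller boundary classification (reference point 1).
   0 unattainable  <->  Sigma(0) = int_0^1 M[0,y] s(y) dy = +oo
   (written as the monotone limit a -> 0+ of int_a^1 M[a,y] s(y) dy). *)
Definition zero_unattainable (mu sigma : R -> R) : Prop :=
  filterlim (fun a => RInt (fun y => Mspeed mu sigma a y * sdens mu sigma y) a 1)
    (at_right 0) (Rbar_locally p_infty).

Definition infinity_natural (mu sigma : R -> R) : Prop :=
  filterlim (fun b => RInt (fun y => Sscale mu sigma 1 y * mdens mu sigma y) 1 b)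
    (Rbar_locally p_infty) (Rbar_locally p_infty) /\
  filterlim (fun b => RInt (fun y => Mspeed mu sigma 1 y * sdens mu sigma y) 1 b)
    (Rbar_locally p_infty) (Rbar_locally p_infty).

Definition lambda_ab (mu sigma h : R -> R) (c1 c2 a b : R) : R :=
  / Mspeed mu sigma a b *
  (RInt (fun x => h x * mdens mu sigma x) a b
   + c1 / (2 * sdens mu sigma b) - c2 / (2 * sdens mu sigma a)).

Definition assumption71 (mu sigma h : R -> R) (c1 c2 : R) : Prop :=
  let pi1 := fun x => h x + c1 * mu x in
  let pi2 := fun x => h x + c2 * mu x in
  (exists h' mu', C1_nonneg h h' /\ C1_nonneg mu mu' /\
     (forall x, 0 < x -> 0 < h' x)) /\
  h 0 = 0 /\ mu 0 = 0 /\
  (exists xh1 xh2, 0 < xh1 /\ 0 < xh2 /\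
     (forall x y, 0 < x -> x < y -> y < xh1 -> pi1 x < pi1 y) /\
     (forall x y, xh1 <= x -> x < y -> pi1 y < pi1 x) /\
     (forall x y, 0 < x -> x < y -> y < xh2 -> pi2 x < pi2 y) /\
     (forall x y, xh2 <= x -> x < y -> pi2 y < pi2 x) /\
     (exists l : Rbar, is_lim pi1 p_infty l /\ Rbar_lt l 0) /\
  (* (iii): liminf_{a -> 0+} [ ... ] > 0, for the point b0 > xh1 with pi1 b0 = 0 *)
     (forall b0, xh1 < b0 -> pi1 b0 = 0 ->
        exists eps, 0 < eps /\ exists delta, 0 < delta /\
          forall a, 0 < a -> a < delta ->
            eps <= RInt (fun y => (pi1 y - pi1 b0) * mdens mu sigma y) a b0
                   + (c1 - c2) / (2 * sdens mu sigma a))).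

(* Main.v *)
Require Import Defs.
From Stdlib Require Import Reals Lra ClassicalEpsilon.
From Coquelicot Require Import Coquelicot.
Open Scope R_scope.

Lemma cont_eps (f : R -> R) x : continuous f x ->
  forall eps, 0 < eps -> exists d, 0 < d /\ forall y, Rabs (y - x) < d -> Rabs (f y - f x) < eps.
Proof.
  intros Hc eps He.
  destruct (proj1 (filterlim_locally f (f x)) Hc (mkposreal eps He)) as [d Hd].
  exists d. split. apply cond_pos. intros y Hy. apply (Hd y). exact Hy.
Qed.

Lemma eps_cont (f : R -> R) x :
  (forall eps, 0 < eps -> exists d, 0 < d /\ forall y, Rabs (y - x) < d -> Rabs (f y - f x) < eps)
  -> continuous f x.
Proof.
  intros H. apply (proj2 (filterlim_locally f (f x))). intros eps.
  destruct (H eps (cond_pos eps)) as [d [Hd H2]].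
  exists (mkposreal d Hd). intros y Hy. apply H2. exact Hy.
Qed.

Lemma cn_pos f x : cont_nonneg f -> 0 < x -> continuous f x.
Proof.
  intros Hc Hx. apply eps_cont. intros eps He.
  specialize (Hc x (Rlt_le _ _ Hx)).
  destruct (proj1 (filterlim_locally f (f x)) Hc (mkposreal eps He)) as [d Hd].
  exists (Rmin d x). split. apply Rmin_pos; [apply cond_pos|lra].
  intros y Hy. apply (Hd y).
  - change (Rabs (y - x) < d). eapply Rlt_le_trans. exact Hy. apply Rmin_l.
  - assert (Rabs (y - x) < x) by (eapply Rlt_le_trans; [exact Hy|apply Rmin_r]).
    apply Rabs_def2 in H. lra.
Qed.

Lemma cn_zero f : cont_nonneg f ->
  forall eps, 0 < eps -> exists d, 0 < d /\ forall y, 0 <= y < d -> Rabs (f y - f 0) < eps.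
Proof.
  intros Hc eps He. specialize (Hc 0 (Rle_refl 0)).
  destruct (proj1 (filterlim_locally f (f 0)) Hc (mkposreal eps He)) as [d Hd].
  exists d. split. apply cond_pos. intros y Hy. apply (Hd y).
  - change (Rabs (y - 0) < d). rewrite Rminus_0_r, Rabs_right; lra.
  - lra.
Qed.

Lemma c1_pos f f' x : C1_nonneg f f' -> 0 < x -> continuous f x.
Proof.
  intros [H _] Hx. apply (@ex_derive_continuous R_AbsRing R_NormedModule). exists (f' x). apply H, Hx.
Qed.

Lemma c1_zero f f' : C1_nonneg f f' ->
  forall eps, 0 < eps -> exists d, 0 < d /\ forall y, 0 <= y < d -> Rabs (f y - f 0) < eps.
Proof.
  intros [_ [H _]] eps He.
  destruct (proj1 (filterlim_locally _ (f' 0)) H (mkposreal 1 Rlt_0_1)) as [d Hd].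
  set (K := Rabs (f' 0) + 1).
  assert (HK : 0 < K) by (unfold K; pose proof (Rabs_pos (f' 0)); lra).
  exists (Rmin d (eps / K)). split.
  { apply Rmin_pos. apply cond_pos. apply Rdiv_lt_0_compat; lra. }
  intros y [Hy0 Hy].
  destruct (Req_dec y 0) as [->|Hne].
  { rewrite Rminus_diag, Rabs_R0. lra. }
  assert (Hyp : 0 < y) by lra.
  assert (Hb : Rabs ((f y - f 0) / y - f' 0) < 1).
  { apply (Hd y).
    - change (Rabs (y - 0) < d). rewrite Rminus_0_r, Rabs_right by lra.
      eapply Rlt_le_trans. exact Hy. apply Rmin_l.
    - exact Hyp. }
  assert (Hq : Rabs ((f y - f 0) / y) < K).
  { unfold K. pose proof (Rabs_triang ((f y - f 0) / y - f' 0) (f' 0)).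
    replace ((f y - f 0) / y - f' 0 + f' 0) with ((f y - f 0) / y) in H0 by ring. lra. }
  replace (f y - f 0) with (y * ((f y - f 0) / y)) by (field; lra).
  rewrite Rabs_mult, (Rabs_right y) by lra.
  assert (Hye : y < eps / K) by (eapply Rlt_le_trans; [exact Hy|apply Rmin_r]).
  apply Rle_lt_trans with (y * K).
  apply Rmult_le_compat_l; lra.
  apply (Rmult_lt_compat_r K) in Hye; [|lra].
  replace (eps / K * K) with eps in Hye by (field; lra). lra.
Qed.

Lemma ivt_dec (f : R -> R) x y : x <= y ->
  (forall z, x <= z <= y -> continuous f z) -> f y <= 0 -> 0 <= f x ->
  exists z, x <= z <= y /\ f z = 0.
Proof.
  intros Hxy Hc Hy Hx.
  destruct (Req_dec (f x) 0) as [E|E]. { exists x. split; [lra|exact E]. }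
  destruct (Req_dec (f y) 0) as [E'|E']. { exists y. split; [lra|exact E']. }
  destruct (Ranalysis5.IVT_interv (fun z => - f z) x y) as [z [Hz Hz']].
  - intros a Ha. apply continuity_pt_filterlim. apply (continuous_opp f). apply Hc, Ha.
  - destruct (Req_dec x y) as [->|]; [lra|lra].
  - lra.
  - lra.
  - exists z. split. exact Hz. lra.
Qed.
Definition cpos (f : R -> R) := forall x, 0 < x -> continuous f x.
Definition Prim (f : R -> R) x := RInt f 1 x.

Lemma cpos_ex f a b : cpos f -> 0 < a -> 0 < b -> ex_RInt f a b.
Proof.
  intros Hc Ha Hb. apply (@ex_RInt_continuous R_CompleteNormedModule). intros z Hz. apply Hc.
  assert (0 < Rmin a b) by (apply Rmin_pos; lra). lra.
Qed.

Lemma prim_diff f a b : cpos f -> 0 < a -> 0 < b -> RInt f a b = Prim f b - Prim f a.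
Proof.
  intros Hc Ha Hb. unfold Prim.
  assert (E : RInt f 1 a + RInt f a b = RInt f 1 b).
  { apply (@RInt_Chasles R_CompleteNormedModule f 1 a b); (apply cpos_ex; [exact Hc|lra|lra]). }
  revert E. generalize (RInt f 1 a) (RInt f a b) (RInt f 1 b). intros x y z E. simpl in *. lra.
Qed.

Lemma prim_deriv f x : cpos f -> 0 < x -> is_derive (Prim f) x (f x).
Proof.
  intros Hc Hx. apply (@is_derive_RInt R_CompleteNormedModule f (Prim f) 1 x); [|apply Hc, Hx].
  apply locally_interval with (a := Finite 0) (b := p_infty); simpl; auto.
  intros y Hy _. apply RInt_correct. apply cpos_ex; [exact Hc|lra|lra].
Qed.

Lemma prim_cont f x : cpos f -> 0 < x -> continuous (Prim f) x.
Proof.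
  intros Hc Hx. apply (@ex_derive_continuous R_AbsRing R_NormedModule).
  exists (f x). apply prim_deriv; auto.
Qed.

Lemma prim_lt f a b : cpos f -> 0 < a -> a < b -> (forall x, a < x < b -> 0 < f x) ->
  Prim f a < Prim f b.
Proof.
  intros Hc Ha Hab Hp.
  assert (H : 0 < RInt f a b) by (apply RInt_gt_0; auto; intros; apply Hc; lra).
  rewrite (prim_diff f a b Hc Ha) in H by lra. lra.
Qed.

Lemma prim_le f a b : cpos f -> 0 < a -> a <= b -> (forall x, a < x < b -> 0 <= f x) ->
  Prim f a <= Prim f b.
Proof.
  intros Hc Ha Hab Hp.
  assert (H : 0 <= RInt f a b) by (apply RInt_ge_0; auto; apply cpos_ex; auto; lra).
  rewrite (prim_diff f a b Hc Ha) in H by lra. lra.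
Qed.

Lemma RInt_lin3 f1 f2 f3 c L a b : cpos f1 -> cpos f2 -> cpos f3 -> 0 < a -> 0 < b ->
  RInt (fun x => f1 x + c * f2 x - L * f3 x) a b = RInt f1 a b + c * RInt f2 a b - L * RInt f3 a b.
Proof.
  intros H1 H2 H3 Ha Hb.
  apply (@is_RInt_unique R_CompleteNormedModule).
  apply (@is_RInt_minus R_NormedModule (fun x => f1 x + c * f2 x) (fun x => L * f3 x)).
  - apply (@is_RInt_plus R_NormedModule f1 (fun x => c * f2 x)).
    + apply (@RInt_correct R_CompleteNormedModule). apply cpos_ex; auto.
    + apply (@is_RInt_scal R_NormedModule f2). apply (@RInt_correct R_CompleteNormedModule). apply cpos_ex; auto.
  - apply (@is_RInt_scal R_NormedModule f3). apply (@RInt_correct R_CompleteNormedModule). apply cpos_ex; auto.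
Qed.
Lemma cR_mult (f g : R -> R) x : continuous f x -> continuous g x -> continuous (fun y => f y * g y) x.
Proof. intros. apply (continuous_mult f g); auto. Qed.
Lemma cR_plus (f g : R -> R) x : continuous f x -> continuous g x -> continuous (fun y => f y + g y) x.
Proof. intros. apply (@continuous_plus R_UniformSpace R_AbsRing R_NormedModule f g); auto. Qed.
Lemma cR_minus (f g : R -> R) x : continuous f x -> continuous g x -> continuous (fun y => f y - g y) x.
Proof. intros. apply (@continuous_minus R_UniformSpace R_AbsRing R_NormedModule f g); auto. Qed.
Lemma cR_const (c : R) x : continuous (fun _ : R => c) x.
Proof. apply continuous_const. Qed.
Lemma cR_id x : continuous (fun y : R => y) x.
Proof. apply continuous_id. Qed.
Lemma cR_inv (f : R -> R) x : continuous f x -> f x <> 0 -> continuous (fun y => / f y) x.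
Proof. intros. apply continuous_Rinv_comp; auto. Qed.
Lemma cR_exp (f : R -> R) x : continuous f x -> continuous (fun y => exp (f y)) x.
Proof. intros. apply continuous_exp_comp; auto. Qed.
Lemma cR_opp (f : R -> R) x : continuous f x -> continuous (fun y => - f y) x.
Proof. intros. apply (@continuous_opp R_UniformSpace R_AbsRing R_NormedModule f); auto. Qed.
Lemma cR_pow2 (f : R -> R) x : continuous f x -> continuous (fun y => f y ^ 2) x.
Proof. intros. apply (@continuous_ext R_UniformSpace R_UniformSpace (fun y => f y * f y)). intros; simpl; ring. apply cR_mult; auto. Qed.
Lemma cR_ext (f g : R -> R) x : (forall y, f y = g y) -> continuous f x -> continuous g x.
Proof. intros. apply (@continuous_ext R_UniformSpace R_UniformSpace f); auto. Qed.

Definition gg (mu sigma : R -> R) := fun y => 2 * mu y / (sigma y ^ 2).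
Definition uu (mu sigma : R -> R) x := / (2 * sdens mu sigma x).

Lemma sig_ne (mu sigma : R -> R) x : (forall x, 0 < x -> 0 < sigma x) -> 0 < x -> sigma x ^ 2 <> 0.
Proof. intros H Hx. specialize (H x Hx). apply pow_nonzero. lra. Qed.

Lemma gg_cpos (mu sigma : R -> R) : cont_nonneg mu -> cont_nonneg sigma -> (forall x, 0 < x -> 0 < sigma x) ->
  cpos (gg mu sigma).
Proof.
  intros Hm Hs Hp x Hx. unfold gg.
  apply (cR_ext (fun y => (2 * mu y) * / (sigma y ^ 2))). { intros; reflexivity. }
  apply cR_mult. apply cR_mult. apply cR_const. apply cn_pos; auto.
  apply cR_inv. apply cR_pow2. apply cn_pos; auto. apply sig_ne; auto.
Qed.

Lemma s_eq (mu sigma : R -> R) x : sdens mu sigma x = exp (- Prim (gg mu sigma) x).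
Proof. reflexivity. Qed.

Lemma s_pos (mu sigma : R -> R) x : 0 < sdens mu sigma x.
Proof. apply exp_pos. Qed.

Lemma m_pos (mu sigma : R -> R) x : (forall x, 0 < x -> 0 < sigma x) -> 0 < x -> 0 < mdens mu sigma x.
Proof.
  intros H Hx. unfold mdens. apply Rinv_0_lt_compat. apply Rmult_lt_0_compat.
  specialize (H x Hx). apply pow_lt. lra. apply s_pos.
Qed.

Lemma s_cpos (mu sigma : R -> R) : cont_nonneg mu -> cont_nonneg sigma -> (forall x, 0 < x -> 0 < sigma x) ->
  cpos (sdens mu sigma).
Proof.
  intros Hm Hs Hp x Hx.
  apply (cR_ext (fun y => exp (- Prim (gg mu sigma) y))). { intros; reflexivity. }
  apply cR_exp. apply cR_opp. apply prim_cont; auto. apply gg_cpos; auto.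
Qed.

Lemma m_cpos (mu sigma : R -> R) : cont_nonneg mu -> cont_nonneg sigma -> (forall x, 0 < x -> 0 < sigma x) ->
  cpos (mdens mu sigma).
Proof.
  intros Hm Hs Hp x Hx. unfold mdens.
  apply cR_inv. apply cR_mult. apply cR_pow2. apply cn_pos; auto. apply s_cpos; auto.
  apply Rgt_not_eq. apply Rmult_lt_0_compat. specialize (Hp x Hx). apply pow_lt. lra. apply s_pos.
Qed.

Lemma u_deriv (mu sigma : R -> R) x : cont_nonneg mu -> cont_nonneg sigma -> (forall x, 0 < x -> 0 < sigma x) ->
  0 < x -> is_derive (uu mu sigma) x (mu x * mdens mu sigma x).
Proof.
  intros Hm Hs Hp Hx.
  apply (@is_derive_ext R_AbsRing R_NormedModule (fun y => / 2 * exp (Prim (gg mu sigma) y))).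
  { intros t. simpl. unfold uu. rewrite s_eq. rewrite exp_Ropp. field. apply Rgt_not_eq, exp_pos. }
  replace (mu x * mdens mu sigma x) with (/ 2 * (gg mu sigma x * exp (Prim (gg mu sigma) x))).
  2:{ unfold mdens. rewrite s_eq, exp_Ropp. set (P := Prim (gg mu sigma) x). unfold gg. field. split. apply Rgt_not_eq, exp_pos.
      specialize (Hp x Hx). lra. }
  apply (is_derive_scal (fun y => exp (Prim (gg mu sigma) y))).
  apply (is_derive_comp exp (Prim (gg mu sigma))).
  apply is_derive_exp. apply prim_deriv; auto. apply gg_cpos; auto.
Qed.

Lemma u_cont (mu sigma : R -> R) x : cont_nonneg mu -> cont_nonneg sigma -> (forall x, 0 < x -> 0 < sigma x) ->
  0 < x -> continuous (uu mu sigma) x.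
Proof.
  intros. apply (@ex_derive_continuous R_AbsRing R_NormedModule).
  eexists. apply u_deriv; auto.
Qed.

Lemma mum_cpos (mu sigma : R -> R) : cont_nonneg mu -> cont_nonneg sigma -> (forall x, 0 < x -> 0 < sigma x) ->
  cpos (fun x => mu x * mdens mu sigma x).
Proof.
  intros Hm Hs Hp x Hx. apply cR_mult. apply cn_pos; auto. apply m_cpos; auto.
Qed.

Lemma Imu (mu sigma : R -> R) a b : cont_nonneg mu -> cont_nonneg sigma -> (forall x, 0 < x -> 0 < sigma x) ->
  0 < a -> 0 < b -> RInt (fun x => mu x * mdens mu sigma x) a b = uu mu sigma b - uu mu sigma a.
Proof.
  intros Hm Hs Hp Ha Hb.
  assert (0 < Rmin a b) by (apply Rmin_pos; lra).
  apply (@is_RInt_unique R_CompleteNormedModule).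
  apply (@is_RInt_derive R_CompleteNormedModule (uu mu sigma)).
  - intros x Hx. apply u_deriv; auto; lra.
  - intros x Hx. apply mum_cpos; auto; lra.
Qed.

Lemma inc_to_end (f : R -> R) lo c : lo < c -> continuous f c ->
  (forall x y, lo < x -> x < y -> y < c -> f x < f y) ->
  forall x, lo < x -> x < c -> f x < f c.
Proof.
  intros Hlc Hc Hm x Hx1 Hx2.
  destruct (Rlt_or_le (f x) (f c)) as [H|H]; [exact H|exfalso].
  set (y := (x + c) / 2).
  assert (Hy : f x < f y) by (apply Hm; unfold y; lra).
  destruct (cont_eps f c Hc (f y - f c)) as [d [Hd Hd2]]; [lra|].
  set (z := Rmax y (c - d / 2)).
  assert (Hz1 : y <= z) by apply Rmax_l.
  assert (Hz2 : c - d / 2 <= z) by apply Rmax_r.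
  assert (Hz3 : z < c) by (unfold z, Rmax; destruct Rle_dec; unfold y in *; lra).
  assert (Hfz : f y <= f z).
  { destruct (Req_dec y z) as [E|E]. rewrite E; lra. apply Rlt_le, Hm; unfold y in *; lra. }
  specialize (Hd2 z). assert (Rabs (z - c) < d) by (rewrite Rabs_left; lra).
  specialize (Hd2 H0). apply Rabs_def2 in Hd2. lra.
Qed.

Lemma inc_from_zero (f : R -> R) c :
  (forall eps, 0 < eps -> exists d, 0 < d /\ forall y, 0 < y < d -> Rabs (f y) < eps) ->
  (forall x y, 0 < x -> x < y -> y < c -> f x < f y) ->
  forall x, 0 < x -> x < c -> 0 < f x.
Proof.
  intros Hc Hm x Hx1 Hx2.
  destruct (Rlt_or_le 0 (f x)) as [H|H]; [exact H|exfalso].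
  set (y := x / 2).
  assert (Hy : f y < f x) by (apply Hm; unfold y; lra).
  destruct (Hc (- f y)) as [d [Hd Hd2]]; [lra|].
  set (z := Rmin y (d / 2)).
  assert (Hz1 : z <= y) by apply Rmin_l.
  assert (Hz2 : z <= d / 2) by apply Rmin_r.
  assert (Hz3 : 0 < z) by (apply Rmin_pos; unfold y; lra).
  assert (Hfz : f z <= f y).
  { destruct (Req_dec y z) as [E|E]. rewrite E; lra. apply Rlt_le, Hm; unfold y in *; lra. }
  specialize (Hd2 z ltac:(lra)). apply Rabs_def2 in Hd2. lra.
Qed.

Lemma clamp_lip s s' t : Rabs (Rmax 0 (Rmin s t) - Rmax 0 (Rmin s' t)) <= Rabs (s - s').
Proof.
  unfold Rmax, Rmin. repeat destruct Rle_dec;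
  repeat match goal with |- context [Rabs ?e] => destruct (Rcase_abs e) ; [rewrite (Rabs_left e) by lra | rewrite (Rabs_right e) by lra] end; lra.
Qed.

Definition Jf (Fh Fm u : R -> R) (c L a b : R) := (Fh b - Fh a) + c * (u b - u a) - L * (Fm b - Fm a).
Definition G1f (Fh Fm u p1 : R -> R) (c1 c2 a b : R) := Jf Fh Fm u c1 (p1 b) a b + (c1 - c2) * u a.
Definition G2f (Fh Fm u p2 : R -> R) (c1 c2 a b : R) := Jf Fh Fm u c2 (p2 a) a b + (c1 - c2) * u b.

Lemma G12 Fh Fm u p1 p2 c1 c2 a b :
  G1f Fh Fm u p1 c1 c2 a b - G2f Fh Fm u p2 c1 c2 a b = (p2 a - p1 b) * (Fm b - Fm a).
Proof. unfold G1f, G2f, Jf. ring. Qed.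

Lemma sol_props (Fh Fm u p1 p2 : R -> R) c1 c2 xh1 xh2 a b :
  c1 < c2 -> 0 < xh1 -> 0 < xh2 ->
  (forall x, 0 < x -> 0 < u x) ->
  (forall a b, 0 < a -> a < b -> Fm a < Fm b) ->
  (forall L a b, 0 < a -> a <= b -> (forall x, a < x < b -> p1 x <= L) -> Jf Fh Fm u c1 L a b <= 0) ->
  (forall L a b, 0 < a -> a <= b -> (forall x, a < x < b -> p2 x <= L) -> Jf Fh Fm u c2 L a b <= 0) ->
  continuous p1 xh1 ->
  (forall x y, 0 < x -> x < y -> y < xh1 -> p1 x < p1 y) ->
  (forall x y, xh2 <= x -> x < y -> p2 y < p2 x) ->
  0 < a -> a < b -> G2f Fh Fm u p2 c1 c2 a b = 0 -> G1f Fh Fm u p1 c1 c2 a b = 0 ->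
  p1 b = p2 a /\ xh1 < b /\ a < xh2.
Proof.
  intros Hc Hx1 Hx2 Hu HFm S1 S2 Hc1 M1 M2 Ha Hab E2 E1.
  pose proof (G12 Fh Fm u p1 p2 c1 c2 a b) as E. rewrite E1, E2 in E.
  assert (HM := HFm a b Ha Hab).
  split.
  { assert (p2 a - p1 b = 0). 
    { apply (Rmult_eq_reg_r (Fm b - Fm a)). lra. lra. } lra. }
  split.
  - destruct (Rlt_or_le xh1 b) as [H|H]; [exact H|exfalso].
    assert (J := S1 (p1 b) a b Ha (Rlt_le _ _ Hab)).
    assert (Jle : Jf Fh Fm u c1 (p1 b) a b <= 0).
    { apply J. intros x Hx. destruct (Req_dec b xh1) as [->|Hne].
      - apply Rlt_le, (inc_to_end p1 0 xh1); auto; lra.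
      - apply Rlt_le, M1; lra. }
    unfold G1f in E1. assert (0 < u a) by auto. nra.
  - destruct (Rlt_or_le a xh2) as [H|H]; [exact H|exfalso].
    assert (Jle : Jf Fh Fm u c2 (p2 a) a b <= 0).
    { apply S2; try lra. intros x Hx. apply Rlt_le, M2; lra. }
    unfold G2f in E2. assert (0 < u b) by (apply Hu; lra). nra.
Qed.

Lemma uniq_two (Fh Fm u p1 p2 : R -> R) c1 c2 xh1 xh2 a b a' b' :
  (forall a b, 0 < a -> a < b -> Fm a < Fm b) ->
  (forall L a b, 0 < a -> a <= b -> (forall x, a < x < b -> L <= p1 x) -> 0 <= Jf Fh Fm u c1 L a b) ->
  (forall L a b, 0 < a -> a <= b -> (forall x, a < x < b -> L <= p2 x) -> 0 <= Jf Fh Fm u c2 L a b) ->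
  (forall x y, xh1 <= x -> x < y -> p1 y < p1 x) ->
  (forall x y, 0 < x -> x < y -> y < xh2 -> p2 x < p2 y) ->
  0 < a -> a < b -> a < a' -> a' < b' ->
  p1 b = p2 a -> xh1 < b -> a < xh2 ->
  p1 b' = p2 a' -> xh1 < b' -> a' < xh2 ->
  G1f Fh Fm u p1 c1 c2 a b = 0 -> G1f Fh Fm u p1 c1 c2 a' b' = 0 -> False.
Proof.
  intros HFm S1 S2 M1 M2 Ha Hab Haa' Ha'b' P Hb Ha2 P' Hb' Ha2' E E'.
  assert (HL : p2 a < p2 a') by (apply M2; lra).
  assert (Hbb : b' < b).
  { destruct (Rlt_or_le b' b) as [H|H]; [exact H|].
    destruct (Req_dec b b') as [<-|Hne]; [lra|].
    assert (p1 b' < p1 b) by (apply M1; lra). lra. }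
  assert (I1 : 0 <= Jf Fh Fm u c2 (p2 a) a a').
  { apply S2; try lra. intros x Hx. apply Rlt_le, M2; lra. }
  assert (I2 : 0 <= Jf Fh Fm u c1 (p2 a) b' b).
  { apply S1; try lra. intros x Hx. rewrite <- P. apply Rlt_le, M1; lra. }
  assert (I3 : Fm a' < Fm b') by (apply HFm; lra).
  assert (Id : G1f Fh Fm u p1 c1 c2 a b - G1f Fh Fm u p1 c1 c2 a' b' =
    Jf Fh Fm u c2 (p2 a) a a' + Jf Fh Fm u c1 (p2 a) b' b + (p2 a' - p2 a) * (Fm b' - Fm a')).
  { unfold G1f, Jf. rewrite P, P'. ring. }
  rewrite E, E' in Id. nra.
Qed.

Lemma exist_sol (Fh Fm u p1 p2 : R -> R) c1 c2 xh1 xh2 :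
  c1 < c2 -> 0 < xh1 -> 0 < xh2 ->
  (forall x, 0 < x -> continuous Fh x) ->
  (forall x, 0 < x -> continuous Fm x) ->
  (forall x, 0 < x -> continuous u x) ->
  (forall x, 0 < x -> continuous p1 x) ->
  (forall x, 0 < x -> continuous p2 x) ->
  (forall x, 0 < x -> 0 < u x) ->
  (forall a b, 0 < a -> a < b -> Fm a < Fm b) ->
  (forall L a b, 0 < a -> a <= b -> (forall x, a < x < b -> L <= p1 x) -> 0 <= Jf Fh Fm u c1 L a b) ->
  (forall L a b, 0 < a -> a <= b -> (forall x, a < x < b -> p1 x <= L) -> Jf Fh Fm u c1 L a b <= 0) ->
  (forall L a b, 0 < a -> a <= b -> (forall x, a < x < b -> L <= p2 x) -> 0 <= Jf Fh Fm u c2 L a b) ->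
  (forall L a b, 0 < a -> a <= b -> (forall x, a < x < b -> p2 x <= L) -> Jf Fh Fm u c2 L a b <= 0) ->
  (forall eps, 0 < eps -> exists d, 0 < d /\ forall y, 0 < y < d -> Rabs (p1 y) < eps) ->
  (forall eps, 0 < eps -> exists d, 0 < d /\ forall y, 0 < y < d -> Rabs (p2 y) < eps) ->
  (forall x y, 0 < x -> x < y -> y < xh1 -> p1 x < p1 y) ->
  (forall x y, xh1 <= x -> x < y -> p1 y < p1 x) ->
  (forall x y, 0 < x -> x < y -> y < xh2 -> p2 x < p2 y) ->
  (forall x y, xh2 <= x -> x < y -> p2 y < p2 x) ->
  (exists B, xh1 < B /\ p1 B < 0) ->
  (forall b0, xh1 < b0 -> p1 b0 = 0 -> exists eps, 0 < eps /\ exists dl, 0 < dl /\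
     forall a, 0 < a -> a < dl -> eps <= Jf Fh Fm u c1 0 a b0 + (c1 - c2) * u a) ->
  exists a b, 0 < a /\ a < b /\ G2f Fh Fm u p2 c1 c2 a b = 0 /\ G1f Fh Fm u p1 c1 c2 a b = 0.
Proof.
  intros Hc Hx1 Hx2 CFh CFm Cu Cp1 Cp2 Hu HFm S1g S1l S2g S2l Z1 Z2 M1i M1d M2i M2d HB Hiii.
  assert (P1pos : forall x, 0 < x < xh1 -> 0 < p1 x).
  { intros x Hx. apply (inc_from_zero p1 xh1); auto; lra. }
  assert (P2pos : forall x, 0 < x < xh2 -> 0 < p2 x).
  { intros x Hx. apply (inc_from_zero p2 xh2); auto; lra. }
  assert (P1x : 0 < p1 xh1).
  { assert (0 < p1 (xh1/2)) by (apply P1pos; lra).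
    assert (p1 (xh1/2) < p1 xh1) by (apply (inc_to_end p1 0 xh1); auto; lra). lra. }
  assert (P2x : 0 < p2 xh2).
  { assert (0 < p2 (xh2/2)) by (apply P2pos; lra).
    assert (p2 (xh2/2) < p2 xh2) by (apply (inc_to_end p2 0 xh2); auto; lra). lra. }
  assert (M1le : forall x y, xh1 <= x -> x <= y -> p1 y <= p1 x).
  { intros x y H1 H2. destruct (Req_dec x y) as [->|]; [lra|]. apply Rlt_le, M1d; lra. }
  assert (M2le : forall x y, 0 < x -> x <= y -> y <= xh2 -> p2 x <= p2 y).
  { intros x y H1 H2 H3. destruct (Req_dec x y) as [->|]; [lra|].
    destruct (Req_dec y xh2) as [->|].
    - apply Rlt_le, (inc_to_end p2 0 xh2); auto; lra.
    - apply Rlt_le, M2i; lra. }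
  assert (P2pos' : forall x, 0 < x <= xh2 -> 0 < p2 x).
  { intros x Hx. destruct (Req_dec x xh2) as [->|]; [lra|]. apply P2pos; lra. }
  destruct HB as [B [HB1 HB2]].
  destruct (ivt_dec p1 xh1 B) as [b0 [Hb0 Pb0]]; try lra.
  { intros z Hz. apply Cp1; lra. }
  assert (Hb0' : xh1 < b0).
  { destruct (Req_dec xh1 b0) as [E|E]; [|lra]. rewrite <- E in Pb0. lra. }
  destruct (Hiii b0 Hb0' Pb0) as [eps [Heps [dl [Hdl Hiii']]]].
  assert (Hinv_ex : forall y, 0 <= y <= p1 xh1 -> exists b, xh1 <= b <= b0 /\ p1 b = y).
  { intros y Hy. destruct (ivt_dec (fun b => p1 b - y) xh1 b0) as [b [Hb Pb]]; try lra.
    - intros z Hz. apply cR_minus. apply Cp1; lra. apply cR_const.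
    - exists b. split; [lra|]. lra. }
  set (inv := fun y => epsilon (inhabits 0) (fun b => 0 <= y <= p1 xh1 -> xh1 <= b <= b0 /\ p1 b = y)).
  assert (Hinv : forall y, 0 <= y <= p1 xh1 -> xh1 <= inv y <= b0 /\ p1 (inv y) = y).
  { intros y Hy. unfold inv.
    apply (epsilon_spec (inhabits 0) (fun b => 0 <= y <= p1 xh1 -> xh1 <= b <= b0 /\ p1 b = y)); auto.
    destruct (Hinv_ex y Hy) as [b Hb]. exists b. auto. }
  assert (inv_uniq : forall y b, 0 <= y <= p1 xh1 -> xh1 <= b -> p1 b = y -> inv y = b).
  { intros y b Hy Hb Pb. destruct (Hinv y Hy) as [H1 H2].
    destruct (Rtotal_order (inv y) b) as [H|[H|H]]; auto.
    - assert (p1 b < p1 (inv y)) by (apply M1d; lra). lra.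
    - assert (p1 (inv y) < p1 b) by (apply M1d; lra). lra. }
  assert (inv_anti : forall y y', 0 <= y -> y <= y' -> y' <= p1 xh1 -> inv y' <= inv y).
  { intros y y' H1 H2 H3. destruct (Hinv y) as [A1 A2]; [lra|]. destruct (Hinv y') as [B1 B2]; [lra|].
    destruct (Rle_or_lt (inv y') (inv y)) as [H|H]; auto.
    assert (p1 (inv y') < p1 (inv y)) by (apply M1d; lra). lra. }
  assert (inv_cont : forall y0, 0 <= y0 <= p1 xh1 -> forall e, 0 < e -> exists d, 0 < d /\
            forall y, 0 <= y <= p1 xh1 -> Rabs (y - y0) < d -> Rabs (inv y - inv y0) < e).
  { intros y0 Hy0 e He. destruct (Hinv y0 Hy0) as [I1 I2].
    assert (Up : exists d1, 0 < d1 /\ forall y, 0 <= y <= p1 xh1 -> Rabs (y - y0) < d1 -> inv y < inv y0 + e).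
    { destruct (Rle_lt_dec (inv y0 + e) b0) as [Hl|Hl].
      - exists (y0 - p1 (inv y0 + e)). split.
        + assert (p1 (inv y0 + e) < p1 (inv y0)) by (apply M1d; lra). lra.
        + intros y Hy Hd. destruct (Hinv y Hy) as [J1 J2].
          destruct (Rlt_or_le (inv y) (inv y0 + e)) as [Hlt|Hge]; auto. exfalso.
          assert (p1 (inv y) <= p1 (inv y0 + e)) by (apply M1le; lra).
          apply Rabs_def2 in Hd. lra.
      - exists 1. split; [lra|]. intros y Hy _. destruct (Hinv y Hy). lra. }
    assert (Lo : exists d2, 0 < d2 /\ forall y, 0 <= y <= p1 xh1 -> Rabs (y - y0) < d2 -> inv y0 - e < inv y).
    { destruct (Rle_lt_dec xh1 (inv y0 - e)) as [Hl|Hl].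
      - exists (p1 (inv y0 - e) - y0). split.
        + assert (p1 (inv y0) < p1 (inv y0 - e)) by (apply M1d; lra). lra.
        + intros y Hy Hd. destruct (Hinv y Hy) as [J1 J2].
          destruct (Rlt_or_le (inv y0 - e) (inv y)) as [Hlt|Hge]; auto. exfalso.
          assert (p1 (inv y0 - e) <= p1 (inv y)) by (apply M1le; lra).
          apply Rabs_def2 in Hd. lra.
      - exists 1. split; [lra|]. intros y Hy _. destruct (Hinv y Hy). lra. }
    destruct Up as [d1 [Hd1 U]]. destruct Lo as [d2 [Hd2 L]].
    exists (Rmin d1 d2). split. apply Rmin_pos; auto.
    intros y Hy Hd. apply Rabs_def1.
    - assert (inv y < inv y0 + e); [apply U; auto; eapply Rlt_le_trans; [exact Hd|apply Rmin_l]|lra].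
    - assert (inv y0 - e < inv y); [apply L; auto; eapply Rlt_le_trans; [exact Hd|apply Rmin_r]|lra]. }
  assert (inv0 : inv 0 = b0) by (apply inv_uniq; lra).
  set (P := fun a => Rmax 0 (Rmin (p2 a) (p1 xh1))).
  assert (P_range : forall a, 0 <= P a <= p1 xh1).
  { intros a. unfold P, Rmax, Rmin. repeat destruct Rle_dec; lra. }
  assert (P_eq : forall a, 0 <= p2 a -> p2 a <= p1 xh1 -> P a = p2 a).
  { intros a H1 H2. unfold P, Rmax, Rmin. repeat destruct Rle_dec; lra. }
  assert (P_lip : forall a a', Rabs (P a' - P a) <= Rabs (p2 a' - p2 a)).
  { intros a a'. apply clamp_lip. }
  set (beta := fun a => inv (P a)).
  assert (beta_r : forall a, xh1 <= beta a <= b0 /\ p1 (beta a) = P a).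
  { intros a. apply Hinv, P_range. }
  assert (P_cont : forall a, 0 < a -> continuous P a).
  { intros a Ha. apply eps_cont. intros e He.
    destruct (cont_eps p2 a (Cp2 a Ha) e He) as [d [Hd Hd2]].
    exists d. split; auto. intros y Hy. eapply Rle_lt_trans. apply P_lip. auto. }
  assert (beta_cont : forall a, 0 < a -> continuous beta a).
  { intros a Ha. apply eps_cont. intros e He.
    destruct (inv_cont (P a) (P_range a) e He) as [d [Hd Hd2]].
    destruct (cont_eps p2 a (Cp2 a Ha) d Hd) as [d' [Hd' Hd'2]].
    exists d'. split; auto. intros y Hy. unfold beta. apply Hd2. apply P_range.
    eapply Rle_lt_trans. apply P_lip. auto. }
  set (H := fun a => Jf Fh Fm u c2 (P a) a (beta a) + (c1 - c2) * u (beta a)).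
  assert (H_cont : forall a, 0 < a -> continuous H a).
  { intros a Ha. unfold H, Jf.
    assert (Hb : 0 < beta a) by (destruct (beta_r a); lra).
    assert (Cb := beta_cont a Ha).
    apply cR_plus; [apply cR_minus; [apply cR_plus; [apply cR_minus|apply cR_mult; [apply cR_const|apply cR_minus]]|apply cR_mult; [apply P_cont; auto|apply cR_minus]]|apply cR_mult; [apply cR_const|]];
    try (apply (continuous_comp beta); auto); auto. }
  set (a1 := Rmin dl (Rmin xh1 xh2) / 2).
  assert (Ha1 : 0 < a1 /\ a1 < dl /\ a1 < xh1 /\ a1 < xh2).
  { unfold a1. assert (Rmin dl (Rmin xh1 xh2) <= dl) by apply Rmin_l.
    assert (Rmin dl (Rmin xh1 xh2) <= Rmin xh1 xh2) by apply Rmin_r.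
    assert (Rmin xh1 xh2 <= xh1) by apply Rmin_l. assert (Rmin xh1 xh2 <= xh2) by apply Rmin_r.
    assert (0 < Rmin dl (Rmin xh1 xh2)) by (repeat apply Rmin_pos; lra). lra. }
  destruct Ha1 as [Ha1a [Ha1b [Ha1c Ha1d]]].
  assert (E1 := Hiii' a1 Ha1a Ha1b).
  set (Q := fun b => Jf Fh Fm u c2 0 a1 b + (c1 - c2) * u b).
  assert (EQ : Q b0 = Jf Fh Fm u c1 0 a1 b0 + (c1 - c2) * u a1) by (unfold Q, Jf; ring).
  assert (Q_cont : continuous Q b0).
  { unfold Q, Jf. assert (0 < b0) by lra.
    apply cR_plus; [apply cR_minus; [apply cR_plus; [apply cR_minus|apply cR_mult; [apply cR_const|apply cR_minus]]|apply cR_mult; [apply cR_const|apply cR_minus]]|apply cR_mult; [apply cR_const|]];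
    auto; apply cR_const. }
  destruct (cont_eps Q b0 Q_cont (eps / 2)) as [d1 [Hd1 HQ]]; [lra|].
  destruct (inv_cont 0 ltac:(lra) d1 Hd1) as [d3 [Hd3 Hinv0]].
  set (K := Fm b0 - Fm a1).
  assert (HK : 0 < K) by (unfold K; assert (Fm a1 < Fm b0) by (apply HFm; lra); lra).
  set (eta := Rmin d3 (Rmin (eps / (2 * K)) (p1 xh1))).
  assert (Heta : 0 < eta /\ eta <= d3 /\ eta <= eps / (2 * K) /\ eta <= p1 xh1).
  { unfold eta. assert (0 < eps / (2 * K)) by (apply Rdiv_lt_0_compat; lra).
    assert (Rmin (eps / (2 * K)) (p1 xh1) <= eps / (2 * K)) by apply Rmin_l.
    assert (Rmin (eps / (2 * K)) (p1 xh1) <= p1 xh1) by apply Rmin_r.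
    assert (Rmin d3 (Rmin (eps / (2 * K)) (p1 xh1)) <= d3) by apply Rmin_l.
    assert (Rmin d3 (Rmin (eps / (2 * K)) (p1 xh1)) <= Rmin (eps / (2 * K)) (p1 xh1)) by apply Rmin_r.
    assert (0 < Rmin d3 (Rmin (eps / (2 * K)) (p1 xh1))) by (repeat apply Rmin_pos; lra). lra. }
  destruct Heta as [He1 [He2 [He3 He4]]].
  destruct (Z2 eta He1) as [d2 [Hd2 HZ2]].
  set (p := Rmin d2 a1 / 2).
  assert (Hp : 0 < p /\ p < d2 /\ p < a1).
  { unfold p. assert (Rmin d2 a1 <= d2) by apply Rmin_l. assert (Rmin d2 a1 <= a1) by apply Rmin_r.
    assert (0 < Rmin d2 a1) by (apply Rmin_pos; lra). lra. }
  destruct Hp as [Hp1 [Hp2 Hp3]].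
  assert (Hp2p : 0 < p2 p) by (apply P2pos; lra).
  assert (Hp2e : p2 p < eta) by (assert (Rabs (p2 p) < eta) by (apply HZ2; lra); apply Rabs_def2 in H0; lra).
  assert (PPp : P p = p2 p) by (apply P_eq; lra).
  assert (Hbp : Rabs (beta p - b0) < d1).
  { rewrite <- inv0. unfold beta. apply Hinv0. apply P_range. rewrite PPp, Rminus_0_r, Rabs_right; lra. }
  assert (HQp := HQ (beta p) Hbp). apply Rabs_def2 in HQp.
  assert (Hpos : 0 < H p).
  { destruct (beta_r p) as [Br1 Br2].
    assert (I1 : 0 <= Jf Fh Fm u c2 (p2 p) p a1).
    { apply S2g; try lra. intros x Hx. apply Rlt_le, M2i; lra. }
    assert (I2 : Fm (beta p) <= Fm b0).
    { destruct (Req_dec (beta p) b0) as [->|]; [lra|]. apply Rlt_le, HFm; lra. }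
    assert (I3 : p2 p * (Fm (beta p) - Fm a1) <= p2 p * K) by (unfold K; apply Rmult_le_compat_l; lra).
    assert (I4 : p2 p * K < eps / 2).
    { apply Rlt_le_trans with (eps / (2 * K) * K). apply Rmult_lt_compat_r; lra.
      right. field. lra. }
    assert (Id : H p = Jf Fh Fm u c2 (p2 p) p a1 + Q (beta p) - p2 p * (Fm (beta p) - Fm a1)).
    { unfold H, Q, Jf. rewrite PPp. ring. }
    lra. }
  assert (Hae : exists ae, p < ae <= xh2 /\ (forall a, p <= a <= ae -> P a = p2 a) /\
                          (ae < beta ae -> H ae < 0)).
  { destruct (Rle_lt_dec (p2 xh2) (p1 xh1)) as [Hl|Hl].
    - exists xh2. split; [lra|]. split.
      + intros a Ha. apply P_eq. apply Rlt_le, P2pos'; lra.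
        apply Rle_trans with (p2 xh2); auto. apply M2le; lra.
      + intros Hlt. unfold H. rewrite (P_eq xh2) by lra.
        assert (Jf Fh Fm u c2 (p2 xh2) xh2 (beta xh2) <= 0).
        { apply S2l; try lra. intros x Hx. apply Rlt_le, M2d; lra. }
        assert (0 < u (beta xh2)) by (apply Hu; lra). nra.
    - destruct (ivt_dec (fun a => p1 xh1 - p2 a) p xh2) as [ae [Hae1 Hae2]]; try lra.
      { intros z Hz. apply cR_minus. apply cR_const. apply Cp2; lra. }
      assert (Hae3 : p2 ae = p1 xh1) by lra.
      assert (ae <> xh2) by (intro E; rewrite E in Hae3; lra).
      assert (ae <> p) by (intro E; rewrite E in Hae3; lra).
      exists ae. split; [lra|]. split.
      + intros a Ha. apply P_eq. apply Rlt_le, P2pos'; lra.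
        rewrite <- Hae3. apply M2le; lra.
      + intros Hlt. assert (PA : P ae = p2 ae) by (apply P_eq; lra).
        assert (BA : beta ae = xh1).
        { unfold beta. rewrite PA, Hae3. apply inv_uniq; lra. }
        assert (G1n : G1f Fh Fm u p1 c1 c2 ae xh1 < 0).
        { unfold G1f. assert (Jf Fh Fm u c1 (p1 xh1) ae xh1 <= 0).
          { apply S1l; try lra. intros x Hx. apply Rlt_le, (inc_to_end p1 0 xh1); auto; lra. }
          assert (0 < u ae) by (apply Hu; lra). nra. }
        pose proof (G12 Fh Fm u p1 p2 c1 c2 ae xh1) as E. rewrite Hae3 in E.
        replace (H ae) with (G2f Fh Fm u p2 c1 c2 ae xh1).
        2:{ unfold H, G2f. rewrite PA, BA. reflexivity. }
        lra. }
  destruct Hae as [ae [Hae1 [Hae2 Hae3]]].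
  assert (beta_anti : forall a a', p <= a -> a <= a' -> a' <= ae -> beta a' <= beta a).
  { intros a a' H1 H2 H3. unfold beta. apply inv_anti.
    - apply P_range.
    - rewrite !Hae2 by lra. apply M2le; lra.
    - apply P_range. }
  assert (Hq : exists q, p < q <= ae /\ H q < 0 /\ q <= beta q).
  { destruct (Rlt_or_le ae (beta ae)) as [Hl|Hl].
    - exists ae. split; [lra|]. split; [apply Hae3; auto|lra].
    - destruct (ivt_dec (fun a => beta a - a) p ae) as [c [Hc1 Hc2]]; try lra.
      { intros z Hz. apply cR_minus. apply beta_cont; lra. apply cR_id. }
      { destruct (beta_r p). lra. }
      assert (c <> p) by (intro E; rewrite E in Hc2; destruct (beta_r p); lra).
      exists c. split; [lra|]. split; [|lra].
      unfold H. replace (beta c) with c by lra. unfold Jf.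
      assert (0 < u c) by (apply Hu; lra). nra. }
  destruct Hq as [q [Hq1 [Hq2 Hq3]]].
  destruct (ivt_dec H p q) as [z [Hz1 Hz2]]; try lra.
  { intros x Hx. apply H_cont. lra. }
  assert (z <> q) by (intro E; rewrite E in Hz2; lra).
  assert (z <> p) by (intro E; rewrite E in Hz2; lra).
  assert (Hzb : z < beta z) by (assert (beta q <= beta z) by (apply beta_anti; lra); lra).
  assert (PZ : P z = p2 z) by (apply Hae2; lra).
  exists z, (beta z). split; [lra|]. split; [lra|].
  assert (G2z : G2f Fh Fm u p2 c1 c2 z (beta z) = 0).
  { unfold G2f. rewrite <- PZ. exact Hz2. }
  split; [exact G2z|].
  pose proof (G12 Fh Fm u p1 p2 c1 c2 z (beta z)) as E.
  destruct (beta_r z) as [_ Bz]. rewrite Bz, PZ in E. lra.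
Qed.

Lemma hm_cpos (mu sigma h : R -> R) c L :
  cont_nonneg mu -> cont_nonneg sigma -> (forall x, 0 < x -> 0 < sigma x) ->
  (forall x, 0 < x -> continuous h x) ->
  cpos (fun x => (h x + c * mu x - L) * mdens mu sigma x).
Proof.
  intros Hm Hs Hp Hh x Hx. apply cR_mult. apply cR_minus. apply cR_plus. auto.
  apply cR_mult. apply cR_const. apply cn_pos; auto. apply cR_const. apply m_cpos; auto.
Qed.

Lemma IntJ (mu sigma h : R -> R) c L a b :
  cont_nonneg mu -> cont_nonneg sigma -> (forall x, 0 < x -> 0 < sigma x) ->
  (forall x, 0 < x -> continuous h x) -> 0 < a -> 0 < b ->
  RInt (fun x => (h x + c * mu x - L) * mdens mu sigma x) a b =
  Jf (Prim (fun x => h x * mdens mu sigma x)) (Prim (mdens mu sigma)) (uu mu sigma) c L a b.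
Proof.
  intros Hm Hs Hp Hh Ha Hb.
  rewrite (RInt_ext _ (fun x => h x * mdens mu sigma x + c * (mu x * mdens mu sigma x) - L * mdens mu sigma x)).
  2:{ intros x _. simpl. ring. }
  assert (C1 : cpos (fun x => h x * mdens mu sigma x)).
  { intros x Hx. apply cR_mult; auto. apply m_cpos; auto. }
  assert (C2 := mum_cpos mu sigma Hm Hs Hp). assert (C3 := m_cpos mu sigma Hm Hs Hp).
  rewrite RInt_lin3; auto.
  rewrite Imu by auto. rewrite !prim_diff; auto; unfold Jf; ring.
Qed.

Lemma J_ge (mu sigma h : R -> R) c L a b :
  cont_nonneg mu -> cont_nonneg sigma -> (forall x, 0 < x -> 0 < sigma x) ->
  (forall x, 0 < x -> continuous h x) -> 0 < a -> a <= b ->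
  (forall x, a < x < b -> L <= h x + c * mu x) ->
  0 <= Jf (Prim (fun x => h x * mdens mu sigma x)) (Prim (mdens mu sigma)) (uu mu sigma) c L a b.
Proof.
  intros Hm Hs Hp Hh Ha Hab HL.
  rewrite <- (IntJ mu sigma h c L a b) by (auto; lra).
  apply RInt_ge_0; auto. apply cpos_ex; try lra. apply hm_cpos; auto.
  intros x Hx. apply Rmult_le_pos. specialize (HL x Hx). lra.
  apply Rlt_le, m_pos; auto; lra.
Qed.

Lemma J_le (mu sigma h : R -> R) c L a b :
  cont_nonneg mu -> cont_nonneg sigma -> (forall x, 0 < x -> 0 < sigma x) ->
  (forall x, 0 < x -> continuous h x) -> 0 < a -> a <= b ->
  (forall x, a < x < b -> h x + c * mu x <= L) ->
  Jf (Prim (fun x => h x * mdens mu sigma x)) (Prim (mdens mu sigma)) (uu mu sigma) c L a b <= 0.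
Proof.
  intros Hm Hs Hp Hh Ha Hab HL.
  rewrite <- (IntJ mu sigma h c L a b) by (auto; lra).
  apply Rle_trans with (RInt (fun _ => 0) a b).
  - apply RInt_le; auto. apply cpos_ex; try lra. apply hm_cpos; auto.
    apply ex_RInt_const.
    intros x Hx. rewrite <- (Rmult_0_l (mdens mu sigma x)). apply Rmult_le_compat_r.
    apply Rlt_le, m_pos; auto; lra. specialize (HL x Hx). lra.
  - assert (E : RInt (fun _ : R => 0) a b = 0).
    { rewrite RInt_const. apply (@scal_zero_r R_Ring R_ModuleSpace). }
    rewrite E. lra.
Qed.

Lemma zero_comb (f g : R -> R) c :
  (forall eps, 0 < eps -> exists d, 0 < d /\ forall y, 0 <= y < d -> Rabs (f y - f 0) < eps) ->
  (forall eps, 0 < eps -> exists d, 0 < d /\ forall y, 0 <= y < d -> Rabs (g y - g 0) < eps) ->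
  f 0 = 0 -> g 0 = 0 ->
  forall eps, 0 < eps -> exists d, 0 < d /\ forall y, 0 < y < d -> Rabs (f y + c * g y) < eps.
Proof.
  intros Hf Hg F0 G0 eps He.
  set (K := Rabs c + 1).
  assert (HK : 0 < K) by (unfold K; pose proof (Rabs_pos c); lra).
  destruct (Hf (eps / 2)) as [d1 [Hd1 H1]]; [lra|].
  destruct (Hg (eps / (2 * K))) as [d2 [Hd2 H2]]; [apply Rdiv_lt_0_compat; lra|].
  exists (Rmin d1 d2). split. apply Rmin_pos; auto.
  intros y Hy.
  assert (y < d1) by (eapply Rlt_le_trans; [apply Hy|apply Rmin_l]).
  assert (y < d2) by (eapply Rlt_le_trans; [apply Hy|apply Rmin_r]).
  specialize (H1 y ltac:(lra)). specialize (H2 y ltac:(lra)). rewrite F0 in H1. rewrite G0 in H2.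
  rewrite Rminus_0_r in H1, H2.
  eapply Rle_lt_trans. apply Rabs_triang. rewrite Rabs_mult.
  assert (Rabs c * Rabs (g y) <= K * Rabs (g y)).
  { apply Rmult_le_compat_r. apply Rabs_pos. unfold K; lra. }
  assert (K * Rabs (g y) < K * (eps / (2 * K))) by (apply Rmult_lt_compat_l; lra).
  replace (K * (eps / (2 * K))) with (eps / 2) in H4 by (field; lra). lra.
Qed.

Lemma neg_at_inf (f : R -> R) (l : Rbar) x0 : is_lim f p_infty l -> Rbar_lt l 0 ->
  exists B, x0 < B /\ f B < 0.
Proof.
  intros Hl Hneg. apply is_lim_spec in Hl.
  destruct l as [l0| |]; simpl in Hneg; try contradiction.
  - assert (Hp : 0 < - l0 / 2) by lra.
    destruct (Hl (mkposreal _ Hp)) as [M HM]. simpl in HM.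
    exists (Rmax M x0 + 1). split. pose proof (Rmax_r M x0); lra.
    assert (Rabs (f (Rmax M x0 + 1) - l0) < - l0 / 2) by (apply HM; pose proof (Rmax_l M x0); lra).
    apply Rabs_def2 in H. lra.
  - destruct (Hl 0) as [M HM].
    exists (Rmax M x0 + 1). split. pose proof (Rmax_r M x0); lra.
    apply HM. pose proof (Rmax_l M x0); lra.
Qed.

Theorem proposition7p4 (mu sigma h : R -> R) (c1 c2 : R) :
  cont_nonneg mu -> cont_nonneg sigma ->
  (forall x, 0 < x -> 0 < sigma x) ->
  zero_unattainable mu sigma -> infinity_natural mu sigma ->
  0 < c1 -> c1 < c2 ->
  (forall x, 0 <= x -> 0 <= h x) ->
  assumption71 mu sigma h c1 c2 ->
  let pi1 := fun x => h x + c1 * mu x in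
  let pi2 := fun x => h x + c2 * mu x in
  let m := mdens mu sigma in
  let s := sdens mu sigma in
  (exists a b, 0 < a /\ a < b /\
     RInt (fun x => (pi2 x - pi2 a) * m x) a b + (c1 - c2) / (2 * s b) = 0 /\
     RInt (fun x => (pi1 x - pi1 b) * m x) a b + (c1 - c2) / (2 * s a) = 0 /\
     (forall a' b', 0 < a' -> a' < b' ->
        RInt (fun x => (pi2 x - pi2 a') * m x) a' b' + (c1 - c2) / (2 * s b') = 0 ->
        RInt (fun x => (pi1 x - pi1 b') * m x) a' b' + (c1 - c2) / (2 * s a') = 0 ->
        a' = a /\ b' = b)) /\
  (forall a b, 0 < a -> a < b ->
     ((RInt (fun x => (pi2 x - pi2 a) * m x) a b + (c1 - c2) / (2 * s b) = 0 /\
       RInt (fun x => (pi1 x - pi1 b) * m x) a b + (c1 - c2) / (2 * s a) = 0)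
      <-> (lambda_ab mu sigma h c1 c2 a b = pi1 b /\
           lambda_ab mu sigma h c1 c2 a b = pi2 a))).
Proof.
  intros Hmu Hsig Hsp _ _ Hc1 Hc12 _ A71.
  unfold assumption71 in A71. cbv zeta beta in A71.
  destruct A71 as [[h' [mu' [Ch [Cmu Hh']]]] [Hh0 [Hmu0 [xh1 [xh2 [Hx1 [Hx2 [M1i [M1d [M2i [M2d [[l [Hl Hlneg]] H3]]]]]]]]]]]].
  intros pi1 pi2 m s.
  set (Fh := Prim (fun x => h x * mdens mu sigma x)).
  set (Fm := Prim (mdens mu sigma)).
  set (u := uu mu sigma).
  set (p1 := fun x => h x + c1 * mu x).
  set (p2 := fun x => h x + c2 * mu x).
  assert (Chp : forall x, 0 < x -> continuous h x) by (intros; eapply c1_pos; eauto).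
  assert (Eq2 : forall a b, 0 < a -> 0 < b ->
     RInt (fun x => (pi2 x - pi2 a) * m x) a b + (c1 - c2) / (2 * s b) = G2f Fh Fm u p2 c1 c2 a b).
  { intros a b Ha Hb. unfold pi2, m, s.
    rewrite (IntJ mu sigma h c2 (h a + c2 * mu a) a b) by auto.
    unfold G2f, u, uu, Rdiv. reflexivity. }
  assert (Eq1 : forall a b, 0 < a -> 0 < b ->
     RInt (fun x => (pi1 x - pi1 b) * m x) a b + (c1 - c2) / (2 * s a) = G1f Fh Fm u p1 c1 c2 a b).
  { intros a b Ha Hb. unfold pi1, m, s.
    rewrite (IntJ mu sigma h c1 (h b + c1 * mu b) a b) by auto.
    unfold G1f, u, uu, Rdiv. reflexivity. }
  assert (Cp1 : forall x, 0 < x -> continuous p1 x).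
  { intros x Hx. unfold p1. apply cR_plus; auto. apply cR_mult. apply cR_const. apply cn_pos; auto. }
  assert (Cp2 : forall x, 0 < x -> continuous p2 x).
  { intros x Hx. unfold p2. apply cR_plus; auto. apply cR_mult. apply cR_const. apply cn_pos; auto. }
  assert (Cm : cpos (mdens mu sigma)) by (apply m_cpos; auto).
  assert (Chm : cpos (fun x => h x * mdens mu sigma x)).
  { intros x Hx. apply cR_mult; auto. }
  assert (Hu : forall x, 0 < x -> 0 < u x).
  { intros x Hx. unfold u, uu. apply Rinv_0_lt_compat. pose proof (s_pos mu sigma x). lra. }
  assert (HFm : forall a b, 0 < a -> a < b -> Fm a < Fm b).
  { intros a b Ha Hab. unfold Fm. apply prim_lt; auto. intros x Hx. apply m_pos; auto; lra. }
  assert (HB : exists B, xh1 < B /\ p1 B < 0) by (eapply neg_at_inf; eauto).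
  assert (Hiii : forall b0, xh1 < b0 -> p1 b0 = 0 -> exists eps, 0 < eps /\ exists dl, 0 < dl /\
     forall a, 0 < a -> a < dl -> eps <= Jf Fh Fm u c1 0 a b0 + (c1 - c2) * u a).
  { intros b0 Hb0 Pb0. destruct (H3 b0 Hb0 Pb0) as [eps [Heps [dl [Hdl Hd]]]].
    exists eps. split; auto. exists dl. split; auto. intros a Ha Had.
    specialize (Hd a Ha Had).
    rewrite (IntJ mu sigma h c1 (h b0 + c1 * mu b0) a b0) in Hd by (auto; lra).
    unfold p1 in Pb0. rewrite Pb0 in Hd. unfold u, uu. unfold Rdiv in Hd. exact Hd. }
  assert (Z1 := zero_comb h mu c1 (c1_zero h h' Ch) (cn_zero mu Hmu) Hh0 Hmu0).
  assert (Z2 := zero_comb h mu c2 (c1_zero h h' Ch) (cn_zero mu Hmu) Hh0 Hmu0).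
  assert (S1g : forall L a b, 0 < a -> a <= b -> (forall x, a < x < b -> L <= p1 x) -> 0 <= Jf Fh Fm u c1 L a b).
  { intros. apply J_ge; auto. }
  assert (S1l : forall L a b, 0 < a -> a <= b -> (forall x, a < x < b -> p1 x <= L) -> Jf Fh Fm u c1 L a b <= 0).
  { intros. apply J_le; auto. }
  assert (S2g : forall L a b, 0 < a -> a <= b -> (forall x, a < x < b -> L <= p2 x) -> 0 <= Jf Fh Fm u c2 L a b).
  { intros. apply J_ge; auto. }
  assert (S2l : forall L a b, 0 < a -> a <= b -> (forall x, a < x < b -> p2 x <= L) -> Jf Fh Fm u c2 L a b <= 0).
  { intros. apply J_le; auto. }
  assert (CFh : forall x, 0 < x -> continuous Fh x) by (intros; apply prim_cont; auto).
  assert (CFm : forall x, 0 < x -> continuous Fm x) by (intros; apply prim_cont; auto).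
  assert (Cu : forall x, 0 < x -> continuous u x) by (intros; apply u_cont; auto).
  destruct (exist_sol Fh Fm u p1 p2 c1 c2 xh1 xh2) as [a [b [Ha [Hab [E2 E1]]]]]; auto.
  split.
  - exists a, b. split; [lra|]. split; [lra|].
    rewrite Eq2, Eq1 by lra. split; [auto|]. split; [auto|].
    intros a' b' Ha' Hab' E2' E1'. rewrite Eq2 in E2' by lra. rewrite Eq1 in E1' by lra.
    destruct (sol_props Fh Fm u p1 p2 c1 c2 xh1 xh2 a b) as [P [Hb Ha2]]; auto; try lra.
    destruct (sol_props Fh Fm u p1 p2 c1 c2 xh1 xh2 a' b') as [P' [Hb' Ha2']]; auto; try lra.
    destruct (Rtotal_order a a') as [Hlt|[Heq|Hgt]].
    + exfalso. apply (uniq_two Fh Fm u p1 p2 c1 c2 xh1 xh2 a b a' b'); auto.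
    + subst a'. split; auto.
      destruct (Rtotal_order b b') as [Hl2|[He2|Hg2]]; auto.
      * assert (p1 b' < p1 b) by (apply M1d; lra). lra.
      * assert (p1 b < p1 b') by (apply M1d; lra). lra.
    + exfalso. apply (uniq_two Fh Fm u p1 p2 c1 c2 xh1 xh2 a' b' a b); auto.
  - intros a0 b0 Ha0 Hab0. rewrite Eq2, Eq1 by lra.
    unfold lambda_ab, Mspeed.
    rewrite (prim_diff (mdens mu sigma) a0 b0) by (auto; lra).
    rewrite (prim_diff (fun x => h x * mdens mu sigma x) a0 b0) by (auto; lra).
    fold Fm Fh.
    assert (HM : 0 < Fm b0 - Fm a0) by (assert (Fm a0 < Fm b0) by (apply HFm; lra); lra).
    set (M := Fm b0 - Fm a0) in *.
    set (N := Fh b0 - Fh a0 + c1 * u b0 - c2 * u a0).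
    assert (EN : Fh b0 - Fh a0 + c1 / (2 * sdens mu sigma b0) - c2 / (2 * sdens mu sigma a0) = N).
    { unfold N, u, uu, Rdiv. ring. }
    rewrite EN.
    assert (EG1 : G1f Fh Fm u p1 c1 c2 a0 b0 = M * (/ M * N - p1 b0)).
    { unfold G1f, Jf, M, N. field. fold M. lra. }
    assert (EG2 : G2f Fh Fm u p2 c1 c2 a0 b0 = M * (/ M * N - p2 a0)).
    { unfold G2f, Jf, M, N. field. fold M. lra. }
    rewrite EG1, EG2. change (pi1 b0) with (p1 b0). change (pi2 a0) with (p2 a0).
    split.
    + intros [F2 F1].
      apply Rmult_integral in F2. apply Rmult_integral in F1.
      destruct F2 as [F2|F2]; [lra|]. destruct F1 as [F1|F1]; [lra|]. split; lra.
    + intros [F1 F2]. split. rewrite F2; ring. rewrite F1; ring.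
Qed.
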